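(* Let $g\geqslant0$ be even and $i\geqslant0$ an integer. Then: (i) there exists $w_{g,i}\in\mathbb{C}[\alpha,\gamma]$, a unit modulo $J_g^+$, such that $w_{g,i}\gamma^i\zeta^+_{g-2i-1}\equiv\gamma^{i+1}\zeta^+_{g-2i-2}\pmod{J_g^+}$; (ii) there exists $x_{g,i}\in\mathbb{C}[\alpha,\gamma]$, a unit modulo $J_g^+$, such that $\alpha\, x_{g,i}\gamma^i\zeta^+_{g-2i-1}\equiv\gamma^{i+1}\zeta^+_{g-2i-3}\pmod{J_g^+}$ if $i$ is even, and $x_{g,i}\gamma^i\zeta^+_{g-2i-1}\equiv\alpha\,\gamma^{i+1}\zeta^+_{g-2i-3}\pmod{J_g^+}$ if $i$ is odd.
   Context: $\zeta_k^+\in\mathbb{C}[\alpha,\gamma]$: $\zeta^+_i=0$ for $i<0$, $\zeta^+_0=1$, $\zeta^+_{k+1}=\alpha\zeta^+_k+16k^2\zeta^+_{k-1}+2k(k-1)\gamma\zeta^+_{k-2}$ for $k$ even and $\zeta^+_{k+1}=\alpha\zeta^+_k+2k(k-1)\gamma\zeta^+_{k-2}$ for $k$ odd ($k\geqslant0$); $J^+_k=(\zeta^+_k,\zeta^+_{k+1},\zeta^+_{k+2})$. A unit modulo $J$ is an element whose image in $\mathbb{C}[\alpha,\gamma]/J$ is invertible. *)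

(* Defs.v *)
From HB Require Import structures.
From mathcomp Require Import all_boot all_order all_algebra.
From mathcomp Require Import complex.
From mathcomp Require Import reals.
Set Implicit Arguments. Unset Strict Implicit. Unset Printing Implicit Defensive.
Import Order.TTheory GRing.Theory Num.Theory.
Local Open Scope ring_scope.

(* C[alpha, gamma] is modelled as {poly {poly C}}: the outer variable is
   alpha, the inner one is gamma. *)
Section Zeta.
Variable C : comNzRingType.

Definition alpha : {poly {poly C}} := 'X.
Definition gamma : {poly {poly C}} := ('X)%:P.

(* zeta3 k = (zeta_k, zeta_{k-1}, zeta_{k-2}), with zeta_i = 0 for i < 0. *)
Fixpoint zeta3 (k : nat) : {poly {poly C}} * {poly {poly C}} * {poly {poly C}} :=
  match k with
  | 0 => (1, 0, 0)
  | k'.+1 =>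
      let: (a, b, c) := zeta3 k' in
      (alpha * a
       + (if ~~ odd k' then (16 * k' ^ 2)%N%:R * b else 0)
       + (2 * k' * k'.-1)%N%:R * gamma * c, a, b)
  end.

Definition zeta (k : nat) : {poly {poly C}} := (zeta3 k).1.1.

Definition zetaZ (k : int) : {poly {poly C}} :=
  match k with Posz n => zeta n | Negz _ => 0 end.

Definition congrJ (g : nat) (p q : {poly {poly C}}) : Prop :=
  exists a b c : {poly {poly C}},
    p - q = a * zeta g + b * zeta g.+1 + c * zeta g.+2.

Definition unitJ (g : nat) (w : {poly {poly C}}) : Prop :=
  exists u : {poly {poly C}}, congrJ g (u * w) 1.
End Zeta.

(* Main.v *)
Require Import Defs.
From HB Require Import structures.
From mathcomp Require Import all_boot all_order all_algebra.
From mathcomp Require Import complex.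
From mathcomp Require Import reals.
From mathcomp Require Import ring lra zify.
Set Implicit Arguments. Unset Strict Implicit. Unset Printing Implicit Defensive.
Import Order.TTheory GRing.Theory Num.Theory.
Local Open Scope ring_scope.
Section P1.
Variable C : numClosedFieldType.
Local Notation P := {poly {poly C}}.
Local Notation al := (alpha C).
Local Notation ga := (gamma C).
Local Notation z := (zeta C).

Definition inJ (g : nat) (p : P) := congrJ g p 0.

Lemma congrJE g p q : congrJ g p q <-> inJ g (p - q).
Proof. by rewrite /inJ /congrJ subr0. Qed.

Lemma inJ0 g : inJ g 0.
Proof. by exists 0, 0, 0; rewrite !mul0r !addr0 subr0. Qed.

Lemma inJD g p q : inJ g p -> inJ g q -> inJ g (p + q).
Proof.
move=> [a [b [c e1]]] [a' [b' [c' e2]]]; exists (a + a'), (b + b'), (c + c').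
move: e1 e2; rewrite !subr0 => e1 e2; rewrite e1 e2; ring.
Qed.

Lemma inJMl g r p : inJ g p -> inJ g (r * p).
Proof.
move=> [a [b [c e1]]]; exists (r * a), (r * b), (r * c).
move: e1; rewrite !subr0 => e1; rewrite e1; ring.
Qed.

Lemma inJN g p : inJ g p -> inJ g (- p).
Proof. by move=> h; rewrite -mulN1r; apply: inJMl. Qed.

Lemma inJB g p q : inJ g p -> inJ g q -> inJ g (p - q).
Proof. by move=> h1 h2; apply: inJD => //; apply: inJN. Qed.

Lemma inJMr g r p : inJ g p -> inJ g (p * r).
Proof. by move=> h; rewrite mulrC; apply: inJMl. Qed.

Lemma inJz0 g : inJ g (z g).
Proof. by exists 1, 0, 0; rewrite subr0; ring. Qed.
Lemma inJz1 g : inJ g (z g.+1).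
Proof. by exists 0, 1, 0; rewrite subr0; ring. Qed.
Lemma inJz2 g : inJ g (z g.+2).
Proof. by exists 0, 0, 1; rewrite subr0; ring. Qed.

Lemma inJ_eq g p q : p = q -> inJ g p -> inJ g q.
Proof. by move->. Qed.

Lemma zeta0 : z 0 = 1. Proof. by []. Qed.

Lemma zetaS k : z k.+1 = al * z k
   + (if ~~ odd k then (16 * k ^ 2)%N%:R * z k.-1 else 0)
   + (2 * k * k.-1)%N%:R * ga * z k.-2.
Proof.
have h1 : forall n, (zeta3 C n.+1).1.2 = z n.
  by move=> n; rewrite /zeta /=; case: (zeta3 C n) => [[a b] c].
have h2 : forall n, (zeta3 C n.+1).2 = (zeta3 C n).1.2.
  by move=> n; rewrite /=; case: (zeta3 C n) => [[a b] c].
rewrite {1}/zeta /=.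
case E : (zeta3 C k) => [[a b] c] /=.
have -> : a = z k by rewrite /zeta E.
case: k E => [|k] E.
  by rewrite /= in E; case: E => _ _ _; rewrite /= !mul0n !mul0r.
have -> : b = z k by rewrite -h1 E.
case: k E => [|k] E.
  by rewrite /= !muln0 !mul0r.
have -> : c = z k by rewrite -h1 -h2 E.
by [].
Qed.
End P1.
Section P2.
Variable C : numClosedFieldType.
Local Notation P := {poly {poly C}}.
Local Notation al := (alpha C).
Local Notation ga := (gamma C).
Local Notation z := (zeta C).

Definition K (c : C) : P := c%:P%:P.
Definition up (p : {poly C}) : P := map_poly polyC p.

Lemma KM a b : K (a * b) = K a * K b.
Proof. by rewrite /K !polyCM. Qed.
Lemma KD a b : K (a + b) = K a + K b.
Proof. by rewrite /K !polyCD. Qed.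
Lemma KN a : K (- a) = - K a.
Proof. by rewrite /K !polyCN. Qed.
Lemma K1 : K 1 = 1. Proof. by []. Qed.
Lemma Knat n : K n%:R = n%:R.
Proof. by rewrite /K !rmorph_nat. Qed.
Lemma KV (c : C) : c != 0 -> K c^-1 * K c = 1.
Proof. by move=> h; rewrite -KM mulVf. Qed.

Lemma upD p q : up (p + q) = up p + up q. Proof. exact: rmorphD. Qed.
Lemma upB p q : up (p - q) = up p - up q. Proof. exact: rmorphB. Qed.
Lemma upN p : up (- p) = - up p. Proof. exact: rmorphN. Qed.
Lemma upM p q : up (p * q) = up p * up q. Proof. exact: rmorphM. Qed.
Lemma upX : up 'X = al. Proof. by rewrite /up map_polyX. Qed.
Lemma upZ c p : up (c *: p) = K c * up p.
Proof. by rewrite /up map_polyZ /K mul_polyC. Qed.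
Lemma up1 : up 1 = 1. Proof. exact: rmorph1. Qed.
Lemma up0 : up 0 = 0. Proof. exact: rmorph0. Qed.
Lemma upC c : up c%:P = K c. Proof. by rewrite /up map_polyC. Qed.

Lemma inJ_unscale g (c : C) p : c != 0 -> inJ g (K c * p) -> inJ g p.
Proof.
move=> hc h; apply: (inJ_eq (p := K c^-1 * (K c * p))).
  by rewrite mulrA KV // mul1r.
exact: inJMl.
Qed.

Definition cc (k : nat) : C := (2 * k * k.-1)%N%:R.

Lemma cc_neq0 k : (2 <= k)%N -> cc k != 0.
Proof.
move=> hk; rewrite /cc pnatr_eq0 -lt0n !muln_gt0 /=.
by apply/andP; split; lia.
Qed.

Lemma cc_gt0 k : (2 <= k)%N -> 0 < cc k.
Proof.
move=> hk; rewrite /cc ltr0n !muln_gt0 /=.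
by apply/andP; split; lia.
Qed.

Fixpoint fp (G d : nat) : {poly C} * {poly C} :=
  match d with
  | 0 => (0, 1)
  | d'.+1 =>
    let: (a, b) := fp G d' in
    let k := (2 * (G - d'))%N in
    (- ((cc k)^-1 *: ('X * a + (16 * k ^ 2)%N%:R *: b)),
     (cc k.-1)^-1 *: (a - 'X * b))
  end.

Lemma fpS G d : fp G d.+1 =
  (- ((cc (2 * (G - d)))^-1 *: ('X * (fp G d).1 + (16 * (2 * (G - d)) ^ 2)%N%:R *: (fp G d).2)),
     (cc (2 * (G - d)).-1)^-1 *: ((fp G d).1 - 'X * (fp G d).2)).
Proof. by rewrite /=; case: (fp G d). Qed.

End P2.
Section P3.
Variable C : numClosedFieldType.
Local Notation P := {poly {poly C}}.
Local Notation al := (alpha C).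
Local Notation ga := (gamma C).
Local Notation z := (zeta C).
Local Notation K := (@K C).
Local Notation up := (@up C).
Local Notation cc := (@cc C).
Local Notation fp := (@fp C).

Lemma solveJ g (c : C) (X Y : P) : c != 0 -> inJ g (K c * X + Y) -> inJ g (X + K c^-1 * Y).
Proof.
move=> hc h; apply: (inJ_eq (p := K c^-1 * (K c * X + Y))).
  by rewrite mulrDr mulrA KV // mul1r.
exact: inJMl.
Qed.

Lemma ccK k : (2 * k * k.-1)%N%:R = K (cc k).
Proof. by rewrite /cc Knat. Qed.

Lemma odd2 e : odd (2 * e) = false.
Proof. by rewrite oddM. Qed.

Lemma gaZ1 G : (1 <= G)%N -> inJ (2*G) (ga * z (2*G).-1).
Proof.
move=> hG.
have hc : cc (2 * G).+1 != 0 by apply: cc_neq0; lia.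
apply: (inJ_unscale hc).
have e := zetaS C (2 * G).+1.
rewrite /= odd2 /= addr0 ccK in e.
apply: (inJ_eq (p := z (2 * G).+2 - al * z (2 * G).+1)).
  by rewrite e; ring.
by apply: inJB; [apply: inJz2 | apply: inJMl; apply: inJz1].
Qed.

Lemma stepE G d e (a b : {poly C}) :
  congrJ (2*G) (ga^+d * z (2*e).+2) (up a * z (2*G).-1) ->
  congrJ (2*G) (ga^+d * z (2*e).+1) (up b * z (2*G).-1) ->
  inJ (2*G) (ga^+d * z (2*e).+3) ->
  congrJ (2*G) (ga^+d.+1 * z (2*e))
    (up (- ((cc (2*e).+2)^-1 *: ('X * a + (16 * ((2*e).+2) ^ 2)%N%:R *: b))) * z (2*G).-1).
Proof.
move=> /congrJE h1 /congrJE h2 h3; apply/congrJE.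
have hc : cc (2 * e).+2 != 0 by apply: cc_neq0; lia.
rewrite upN upZ mulNr -mulrA opprK.
apply: solveJ => //.
have e0 := zetaS C (2 * e).+2.
rewrite /= odd2 /= ccK in e0.
apply: (inJ_eq (p := ga ^+ d * z (2*e).+3 - al * (ga ^+ d * z (2 * e).+2 - up a * z (2 * G).-1)
     - (16 * ((2*e).+2) ^ 2)%N%:R * (ga ^+ d * z (2 * e).+1 - up b * z (2 * G).-1))).
  rewrite e0 upD upM upX upZ -Knat exprS; ring.
apply: inJB; [apply: inJB => //|]; exact: inJMl.
Qed.

Lemma stepO G d e (a b : {poly C}) :
  congrJ (2*G) (ga^+d * z (2*e).+4) (up a * z (2*G).-1) ->
  congrJ (2*G) (ga^+d * z (2*e).+3) (up b * z (2*G).-1) ->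
  congrJ (2*G) (ga^+d.+1 * z (2*e).+1)
    (up ((cc (2*e).+3)^-1 *: (a - 'X * b)) * z (2*G).-1).
Proof.
move=> /congrJE h1 /congrJE h2; apply/congrJE.
have hc : cc (2 * e).+3 != 0 by apply: cc_neq0; lia.
rewrite upZ -mulrA -mulrN.
apply: solveJ => //.
have e0 := zetaS C (2 * e).+3.
rewrite /= odd2 /= ccK addr0 in e0.
apply: (inJ_eq (p := (ga ^+ d * z (2*e).+4 - up a * z (2 * G).-1)
     - al * (ga ^+ d * z (2 * e).+3 - up b * z (2 * G).-1))).
  rewrite e0 upB upM upX exprS; ring.
apply: inJB => //; exact: inJMl.
Qed.

End P3.
Section P4.
Variable C : numClosedFieldType.
Local Notation P := {poly {poly C}}.
Local Notation al := (alpha C).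
Local Notation ga := (gamma C).
Local Notation z := (zeta C).
Local Notation K := (@K C).
Local Notation up := (@up C).
Local Notation cc := (@cc C).
Local Notation fp := (@fp C).

Lemma congr_refl g (p : P) : congrJ g p p.
Proof. by apply/congrJE; rewrite subrr; apply: inJ0. Qed.

Lemma kill g (Z Y : P) (q : {poly C}) (m : P) :
  inJ g (m * Z) -> congrJ g Y (up q * Z) -> inJ g (m * Y).
Proof.
move=> hm /congrJE h.
apply: (inJ_eq (p := m * (Y - up q * Z) + up q * (m * Z))); first by ring.
by apply: inJD; apply: inJMl.
Qed.

Lemma Hd G : (1 <= G)%N -> forall d e, (d + e.+1 = G)%N ->
  [/\ congrJ (2*G) (ga^+d * z (2*e).+2) (up (fp G d).1 * z (2*G).-1),
      congrJ (2*G) (ga^+d * z (2*e).+1) (up (fp G d).2 * z (2*G).-1) &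
      inJ (2*G) (ga^+d * z (2*e).+3)].
Proof.
move=> hG; elim=> [|d IH] e hde.
  rewrite add0n in hde; rewrite /= up0 up1 !mul0r !mul1r ?expr0 ?mul1r.
  have -> : (2 * e).+2 = (2 * G)%N by lia.
  have -> : (2 * e).+1 = (2 * G).-1 by lia.
  split; [by apply/congrJE; rewrite subr0; apply: inJz0 | exact: congr_refl | exact: inJz1].
have [h1 h2 h3] := IH e.+1 ltac:(lia).
have E1 : (2 * e.+1 = (2 * e).+2)%N by lia.
have E2 : (2 * (G - d) = (2 * e).+4)%N by lia.
rewrite fpS E2 /=.
split.
- have := stepE h1 h2 h3; rewrite E1 //.
- by apply: stepO; rewrite -E1.
- rewrite exprS -mulrA; apply: (kill (q := (fp G d).2)).
    by apply: gaZ1.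
  by rewrite -E1.
Qed.

Lemma Hfinal G : (1 <= G)%N ->
  congrJ (2*G) (ga^+G) (up (fp G G).1 * z (2*G).-1).
Proof.
case: G => // G _.
have [h1 h2 h3] := Hd (isT : (1 <= G.+1)%N) (d := G) (e := 0) ltac:(lia).
have := stepE h1 h2 h3.
rewrite fpS subSnn /= zeta0 mulr1.
by [].
Qed.

End P4.
Section P5.
Variable C : numClosedFieldType.
Local Notation cc := (@cc C).
Local Notation fp := (@fp C).

Definition St (a : C) (r : nat) (A B : C) : Prop := exists x y,
  match r with
  | 0 => A = a * x /\ B = y /\ x <= 0 /\ 0 < y
  | 1 => A = x /\ B = a * y /\ x < 0 /\ y < 0
  | 2 => A = a * x /\ B = y /\ 0 < x /\ y < 0
  | _ => A = x /\ B = a * y /\ 0 < x /\ 0 < y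
  end.

Lemma neg_sum (u v : C) : u <= 0 -> v < 0 -> u + v < 0.
Proof. by move=> hu hv; have := ler_ltD hu hv; rewrite addr0. Qed.
Lemma pos_sum (u v : C) : 0 <= u -> 0 < v -> 0 < u + v.
Proof. by move=> hu hv; have := ler_ltD hu hv; rewrite addr0. Qed.

Lemma stT (a B0 : C) r A B ci ci' n : a * a = - B0 -> 0 < B0 -> 0 < ci -> 0 < ci' -> 0 < n ->
  (r < 4)%N -> St a r A B ->
  St a (r.+1 %% 4) (-(ci * (a*A + n*B))) (ci' * (A - a*B)) /\ -(ci * (a*A + n*B)) != 0.
Proof.
move=> ha hB hci hci' hn hr [x [y h]].
have ha0 : a != 0.
  apply/eqP=> a0; move: ha; rewrite a0 mul0r => /eqP; rewrite eq_sym oppr_eq0.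
  by rewrite gt_eqF.
have hB' : 0 <= B0 by apply: ltW.
case: r hr h => [|[|[|[|r]]]] // _.
- case=> [-> [-> [hx hy]]].
  have Ae : -(ci * (a * (a * x) + n * y)) = ci * (B0 * x + - (n * y)).
    by rewrite mulrA ha; ring.
  have Be : ci' * (a * x - a * y) = a * (ci' * (x + - y)) by ring.
  have hx' : ci * (B0 * x + - (n * y)) < 0.
    rewrite pmulr_rlt0 //; apply: neg_sum; first exact: mulr_ge0_le0.
    by rewrite oppr_lt0 mulr_gt0.
  split; last by rewrite Ae lt_eqF.
  exists (ci * (B0 * x + - (n * y))), (ci' * (x + - y)); rewrite Ae Be.
  do ! split => //; rewrite pmulr_rlt0 //; apply: neg_sum => //.
  by rewrite oppr_lt0.
- case=> [-> [-> [hx hy]]].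
  have Ae : -(ci * (a * x + n * (a * y))) = a * (- (ci * (x + n * y))) by ring.
  have Be : ci' * (x - a * (a * y)) = ci' * (x + B0 * y) by rewrite mulrA ha; ring.
  split; last first.
    rewrite Ae; apply: mulf_neq0 => //; rewrite oppr_eq0 lt_eqF // pmulr_rlt0 //.
    by apply: neg_sum; [apply: ltW | rewrite pmulr_rlt0].
  exists (- (ci * (x + n * y))), (ci' * (x + B0 * y)); rewrite Ae Be.
  do ! split => //.
    rewrite oppr_gt0 pmulr_rlt0 //.
    by apply: neg_sum; [apply: ltW | rewrite pmulr_rlt0].
  rewrite pmulr_rlt0 //; rewrite addrC; apply: neg_sum => //.
  exact: mulr_ge0_le0 (ltW hy).
- case=> [-> [-> [hx hy]]].
  have Ae : -(ci * (a * (a * x) + n * y)) = ci * (B0 * x + - (n * y)).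
    by rewrite mulrA ha; ring.
  have Be : ci' * (a * x - a * y) = a * (ci' * (x + - y)) by ring.
  have hx' : 0 < ci * (B0 * x + - (n * y)).
    rewrite pmulr_rgt0 //; apply: pos_sum; first by rewrite mulr_ge0 // ltW.
    by rewrite oppr_gt0 pmulr_rlt0.
  split; last by rewrite Ae gt_eqF.
  exists (ci * (B0 * x + - (n * y))), (ci' * (x + - y)); rewrite Ae Be.
  do ! split => //; rewrite pmulr_rgt0 //; rewrite addrC; apply: pos_sum; last by [].
  by rewrite oppr_ge0 ltW.
- case=> [-> [-> [hx hy]]].
  have Ae : -(ci * (a * x + n * (a * y))) = a * (- (ci * (x + n * y))) by ring.
  have Be : ci' * (x - a * (a * y)) = ci' * (x + B0 * y) by rewrite mulrA ha; ring.
  have hx' : - (ci * (x + n * y)) < 0.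
    rewrite oppr_lt0 pmulr_rgt0 //; rewrite addrC; apply: pos_sum => //.
    by rewrite ltW // mulr_gt0.
  split; last by rewrite Ae; apply: mulf_neq0 => //; rewrite lt_eqF.
  exists (- (ci * (x + n * y))), (ci' * (x + B0 * y)); rewrite Ae Be.
  do ! split => //; first exact: ltW.
  rewrite pmulr_rgt0 //; rewrite addrC; apply: pos_sum => //.
  by rewrite mulr_ge0 // ltW.
Qed.

Lemma fpS_horner G d (a : C) :
  (fp G d.+1).1.[a] = -((cc (2 * (G - d)))^-1 * (a * (fp G d).1.[a] + (16 * (2 * (G - d)) ^ 2)%N%:R * (fp G d).2.[a]))
  /\ (fp G d.+1).2.[a] = (cc (2 * (G - d)).-1)^-1 * ((fp G d).1.[a] - a * (fp G d).2.[a]).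
Proof.
rewrite fpS /=; split.
  by rewrite hornerN hornerZ hornerD hornerZ hornerM hornerX.
by rewrite hornerZ hornerD hornerN hornerM hornerX.
Qed.

Lemma fp_sign G (a B0 : C) : a * a = - B0 -> 0 < B0 ->
  forall d, (d < G)%N -> St a (d %% 4) (fp G d).1.[a] (fp G d).2.[a].
Proof.
move=> ha hB; elim=> [|d IH] hd.
  by exists 0, 1; rewrite /= horner0 hornerC mulr0 ltr01 lexx.
have [e1 e2] := fpS_horner G d a; rewrite e1 e2.
have -> : (d.+1 %% 4 = (d %% 4).+1 %% 4)%N by rewrite -addn1 -modnDml addn1.
have h1 : 0 < (cc (2 * (G - d)))^-1 by rewrite invr_gt0 cc_gt0 //; lia.
have h2 : 0 < (cc (2 * (G - d)).-1)^-1 by rewrite invr_gt0 cc_gt0 //; lia.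
have h3 : 0 < (16 * (2 * (G - d)) ^ 2)%N%:R :> C by rewrite ltr0n muln_gt0 /= expn_gt0 /=; lia.
have [h _] := stT ha hB h1 h2 h3 (ltn_mod _ _) (IH ltac:(lia)).
exact: h.
Qed.

Lemma fp_final_neq0 G (a B0 : C) : a * a = - B0 -> 0 < B0 -> (1 <= G)%N ->
  (fp G G).1.[a] != 0.
Proof.
move=> ha hB; case: G => // G _.
have [e1 _] := fpS_horner G.+1 G a; rewrite e1.
have hst := fp_sign ha hB (d := G) (leqnn _).
have h1 : 0 < (cc (2 * (G.+1 - G)))^-1 by rewrite invr_gt0 cc_gt0 //; lia.
have h3 : 0 < (16 * (2 * (G.+1 - G)) ^ 2)%N%:R :> C by rewrite ltr0n muln_gt0 /= expn_gt0 /=; lia.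
have [_ //] := stT ha hB h1 ltr01 h3 (ltn_mod _ _) hst.
Qed.

End P5.
Section P6.
Variable C : numClosedFieldType.
Local Notation P := {poly {poly C}}.
Local Notation al := (alpha C).
Local Notation ga := (gamma C).
Local Notation z := (zeta C).
Local Notation K := (@K C).
Local Notation up := (@up C).
Local Notation cc := (@cc C).
Local Notation fp := (@fp C).

Fixpoint Qp (m : nat) : {poly C} :=
  match m with
  | 0 => 1
  | m'.+1 => ('X^2 + ((64 * m'.+1 ^ 2)%N%:R)%:P) * Qp m'
  end.

Lemma factor_sq (a c : C) : a * a = - c ->
  'X^2 + c%:P = ('X - a%:P) * ('X - (- a)%:P).
Proof.
move=> h.
have -> : c = - (a * a) by rewrite h opprK.
by rewrite polyCN polyCM polyCN; ring.
Qed.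

Lemma Qp_coprime G m : (1 <= G)%N -> (m < G)%N -> coprimep (Qp m) (fp G G).1.
Proof.
move=> hG; elim: m => [|m IH] hm /=; first exact: coprime1p.
rewrite coprimepMl IH; last by lia.
rewrite andbT.
set a : C := (8 * m.+1)%N%:R * 'i.
have ha : a * a = - (64 * m.+1 ^ 2)%N%:R.
  rewrite /a mulrACA mulCii mulrN1 -natrM; congr (- _%:R); lia.
have hB : 0 < (64 * m.+1 ^ 2)%N%:R :> C by rewrite ltr0n muln_gt0 expn_gt0.
have ha' : (- a) * (- a) = - (64 * m.+1 ^ 2)%N%:R by rewrite mulrNN.
rewrite (factor_sq ha) coprimepMl !(coprimep_sym _ (fp G G).1) !coprimep_XsubC.
by rewrite /root (fp_final_neq0 ha hB hG) (fp_final_neq0 ha' hB hG).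
Qed.

Definition modg (p q : P) := exists r, p = q + ga * r.

Lemma upXn p n : up (p ^+ n) = up p ^+ n. Proof. exact: rmorphXn. Qed.

Lemma z1 : z 1 = al.
Proof. by rewrite zetaS zeta0 /= !mul0r !addr0 mulr1. Qed.

Lemma z2 : z 2 = al ^+ 2.
Proof. by rewrite zetaS z1 /= !mul0r !addr0 expr2. Qed.

Lemma zmodQ m : modg (z (2 * m).+1) (up ('X * Qp m)) /\ modg (z (2 * m).+2) (up ('X^2 * Qp m)).
Proof.
elim: m => [|m [[r1 h1] [r2 h2]]].
  by rewrite /= z1 z2 !mulr1 upXn upX; split; exists 0; rewrite mulr0 addr0.
have e3 := zetaS C (2 * m).+2.
rewrite /= odd2 /= ccK in e3.
have e4 := zetaS C (2 * m).+3.
rewrite /= odd2 /= ccK addr0 in e4.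
have E1 : (2 * m.+1 = (2 * m).+2)%N by lia.
have E2 : (16 * (2 * m).+2 ^ 2 = 64 * m.+1 ^ 2)%N by lia.
rewrite E1 E2 in e3 *.
have ez3 : modg (z (2 * m).+3) (up ('X * Qp m.+1)).
  exists (al * r2 + (64 * m.+1 ^ 2)%N%:R * r1 + K (cc (2 * m).+2) * z (2 * m)).
  rewrite e3 h1 h2 /= !(upM, upD, upXn, upX, upC) Knat; ring.
split => //.
case: ez3 => r3 h3.
exists (al * r3 + K (cc (2 * m).+3) * z (2 * m).+1).
rewrite e4 h3 /= !(upM, upD, upXn, upX, upC); ring.
Qed.

Lemma Z1sq G : (1 <= G)%N -> inJ (2*G) (z (2*G).-1 * z (2*G).-1).
Proof.
move=> hG.
have hN : (16 * (2 * G) ^ 2)%N%:R != 0 :> C by rewrite pnatr_eq0 muln_eq0 expn_eq0 /=; lia.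
apply: (inJ_unscale hN).
have e := zetaS C (2 * G).
rewrite odd2 /= ccK in e.
apply: (inJ_eq (p := z (2 * G).-1 * (z (2 * G).+1 - al * z (2 * G))
     - K (cc (2 * G)) * z (2 * G).-2 * (ga * z (2 * G).-1))).
  by rewrite e Knat; ring.
apply: inJB; first by apply: inJMl; apply: inJB; [apply: inJz1 | apply: inJMl; apply: inJz0].
by apply: inJMl; apply: gaZ1.
Qed.

Lemma alZ1 G : (1 <= G)%N -> inJ (2*G) (al * z (2*G).-1).
Proof.
move=> hG.
have /Bezout_eq1_coprimepP [[u v] /= huv] := Qp_coprime hG (m := G.-1) ltac:(lia).
have hA : inJ (2*G) (up ('X * Qp G.-1) * z (2*G).-1).
  have [[r h] _] := zmodQ G.-1.
  have E : ((2 * G.-1).+1 = (2 * G).-1)%N by lia.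
  rewrite E in h.
  apply: (inJ_eq (p := z (2 * G).-1 * z (2 * G).-1 - r * (ga * z (2 * G).-1))).
    by rewrite {1}h; ring.
  by apply: inJB; [apply: Z1sq | apply: inJMl; apply: gaZ1].
have hB : inJ (2*G) (up ('X * (fp G G).1) * z (2*G).-1).
  have /congrJE hf := Hfinal C hG.
  have [_ h2 _] := Hd C hG (d := G.-1) (e := 0) ltac:(lia).
  have hk := kill (m := ga) (gaZ1 C hG) h2.
  rewrite /= z1 in hk.
  apply: (inJ_eq (p := - al * (ga ^+ G - up (fp G G).1 * z (2 * G).-1) + ga * (ga ^+ G.-1 * al))).
    rewrite upM upX.
    have -> : ga ^+ G = ga * ga ^+ G.-1 by rewrite -exprS; congr (_ ^+ _); lia.
    ring.
  by apply: inJD => //; apply: inJMl.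
have e : al = up u * up ('X * Qp G.-1) + up v * up ('X * (fp G G).1).
  by rewrite -!upM -upD mulrCA [v * _]mulrCA -mulrDr huv mulr1 upX.
rewrite {1}e mulrDl -!mulrA.
by apply: inJD; apply: inJMl.
Qed.

End P6.
Section P7.
Variable C : numClosedFieldType.
Local Notation P := {poly {poly C}}.
Local Notation al := (alpha C).
Local Notation ga := (gamma C).
Local Notation z := (zeta C).
Local Notation K := (@K C).
Local Notation up := (@up C).
Local Notation cc := (@cc C).
Local Notation fp := (@fp C).

Lemma fp0 G d : (~~ odd d -> (fp G d).1.[0] = 0) /\ (odd d -> (fp G d).2.[0] = 0).
Proof.
elim: d => [|d [IH1 IH2]]; first by rewrite /= horner0.
have [e1 e2] := @fpS_horner C G d 0.
rewrite e1 e2 /= !mul0r add0r subr0; split => hd.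
  by rewrite IH2 ?mulr0 ?oppr0 //; move: hd; rewrite negbK.
by rewrite IH1 ?mulr0.
Qed.

Lemma zero_const G (q : {poly C}) : (1 <= G)%N -> q.[0] = 0 ->
  inJ (2 * G) (up q * z (2 * G).-1).
Proof.
move=> hG /eqP hq.
have /factor_theorem [q' ->] : root q 0 by rewrite /root hq.
rewrite subr0 upM upX -mulrA; apply: inJMl; exact: alZ1.
Qed.

Lemma zero_const2 G (p : P) (q : {poly C}) : (1 <= G)%N -> q.[0] = 0 ->
  congrJ (2 * G) p (up q * z (2 * G).-1) -> inJ (2 * G) p.
Proof.
move=> hG hq /congrJE h.
apply: (inJ_eq (p := (p - up q * z (2 * G).-1) + up q * z (2 * G).-1)); first by ring.
by apply: inJD => //; apply: zero_const.
Qed.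

Lemma zetaZ_neg (k : int) : (k < 0)%R -> zetaZ C k = 0.
Proof. by case: k. Qed.

Lemma zetaZ_pos (n : nat) : zetaZ C n%:Z = z n.
Proof. by []. Qed.

Lemma unitJK g (c : C) : c != 0 -> unitJ g (K c).
Proof.
move=> hc; exists (K c^-1); rewrite KV //; exact: congr_refl.
Qed.

Lemma main (G i : nat) :
  (exists w : P,
      unitJ (2 * G) w /\
      congrJ (2 * G) (w * ga ^+ i * zetaZ C ((2 * G)%N%:Z - (2 * i)%:Z - 1))
               (ga ^+ i.+1 * zetaZ C ((2 * G)%N%:Z - (2 * i)%:Z - 2))) /\
  (exists x : P,
      unitJ (2 * G) x /\
      (if ~~ odd i then
         congrJ (2 * G) (al * x * ga ^+ i * zetaZ C ((2 * G)%N%:Z - (2 * i)%:Z - 1))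
                  (ga ^+ i.+1 * zetaZ C ((2 * G)%N%:Z - (2 * i)%:Z - 3))
       else
         congrJ (2 * G) (x * ga ^+ i * zetaZ C ((2 * G)%N%:Z - (2 * i)%:Z - 1))
                  (al * ga ^+ i.+1 * zetaZ C ((2 * G)%N%:Z - (2 * i)%:Z - 3)))).
Proof.
have u1 : unitJ (2 * G) (1 : P) by exists 1; rewrite mulr1; exact: congr_refl.
case: (ltnP i G) => hiG; last first.
  rewrite !zetaZ_neg; try lia.
  split; exists 1; split => //; rewrite ?mulr0; try exact: congr_refl.
  by case: ifP => _; rewrite ?mulr0; exact: congr_refl.
have hG : (1 <= G)%N by lia.
set e := (G - i - 1)%N.
have hde : (i + e.+1 = G)%N by rewrite /e; lia.
have -> : (2 * G)%N%:Z - (2 * i)%:Z - 1 = ((2 * e).+1)%:Z by rewrite /e; lia.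
have -> : (2 * G)%N%:Z - (2 * i)%:Z - 2 = (2 * e)%N%:Z by rewrite /e; lia.
rewrite !zetaZ_pos.
have [h1 h2 h3] := Hd C hG hde.
have hc : cc (2 * e).+2 != 0 by apply: cc_neq0; lia.
have hn : (16 * (2 * e).+2 ^ 2)%N%:R != 0 :> C by rewrite pnatr_eq0 muln_eq0 expn_eq0 /=; lia.
split.
  exists (K (- ((cc (2 * e).+2)^-1 * (16 * (2 * e).+2 ^ 2)%N%:R))).
  split; first by apply: unitJK; rewrite oppr_eq0 mulf_neq0 // invr_eq0.
  apply/congrJE => /=.
  have hX : inJ (2 * G) (ga ^+ i.+1 * z (2 * e) + K (cc (2 * e).+2)^-1 * ((16 * (2 * e).+2 ^ 2)%N%:R * (ga ^+ i * z (2 * e).+1))).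
    apply: solveJ => //.
    have e0 := zetaS C (2 * e).+2.
    rewrite /= odd2 /= ccK in e0.
    apply: (inJ_eq (p := ga ^+ i * z (2 * e).+3 - al * (ga ^+ i * z (2 * e).+2))).
      by rewrite e0 exprS; ring.
    apply: inJB => //; apply: (kill (alZ1 C hG) h1).
  apply: (inJ_eq (p := - (ga ^+ i.+1 * z (2 * e) + K (cc (2 * e).+2)^-1 * ((16 * (2 * e).+2 ^ 2)%N%:R * (ga ^+ i * z (2 * e).+1))))).
    by rewrite KN KM Knat; ring.
  exact: inJN.
exists 1; split => //.
have hL : inJ (2 * G) (ga ^+ i * z (2 * e).+1) -> congrJ (2 * G) (ga ^+ i * z (2 * e).+1) 0.
  by [].
case: e hde h1 h2 h3 hc hn {hL} => [|e'] hde h1 h2 h3 hc hn.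
  rewrite (zetaZ_neg (k := (2 * G)%N%:Z - (2 * i)%:Z - 3)); last by lia.
  rewrite !mulr0 mulr1.
  case: ifP => hi; apply/congrJE; rewrite subr0.
    rewrite -mulrA; apply: (kill (alZ1 C hG) h2).
  rewrite mul1r; apply: (zero_const2 hG _ h2).
  by have [_ H] := fp0 G i; rewrite H //; apply: negbFE.
have -> : (2 * G)%N%:Z - (2 * i)%:Z - 3 = ((2 * e').+1)%:Z by lia.
rewrite zetaZ_pos mulr1.
have E : (2 * e'.+1 = (2 * e').+2)%N by lia.
rewrite E in h1 h2 h3 *.
have hO := stepO h1 h2.
rewrite /=.
case: ifP => hi; apply/congrJE.
  apply: inJB; first by rewrite -mulrA; apply: (kill (alZ1 C hG) h2).
  apply: (zero_const2 hG _ hO).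
  rewrite hornerZ hornerD hornerN hornerM hornerX mul0r subr0.
  have [H _] := fp0 G i.
  by rewrite (H hi) mulr0.
apply: inJB.
  rewrite mul1r; apply: (zero_const2 hG _ h2).
  by have [_ H] := fp0 G i; rewrite H //; apply: negbFE.
rewrite -mulrA; apply: (kill (alZ1 C hG) hO).
Qed.

End P7.
Theorem lemma5p9 (R : realType) (g i : nat) : ~~ odd g ->
  (exists w : {poly {poly R[i]}},
      unitJ g w /\
      congrJ g (w * gamma _ ^+ i * zetaZ _ (g%:Z - (2 * i)%:Z - 1))
               (gamma _ ^+ i.+1 * zetaZ _ (g%:Z - (2 * i)%:Z - 2))) /\
  (exists x : {poly {poly R[i]}},
      unitJ g x /\
      (if ~~ odd i then
         congrJ g (alpha _ * x * gamma _ ^+ i * zetaZ _ (g%:Z - (2 * i)%:Z - 1))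
                  (gamma _ ^+ i.+1 * zetaZ _ (g%:Z - (2 * i)%:Z - 3))
       else
         congrJ g (x * gamma _ ^+ i * zetaZ _ (g%:Z - (2 * i)%:Z - 1))
                  (alpha _ * gamma _ ^+ i.+1 * zetaZ _ (g%:Z - (2 * i)%:Z - 3)))).
Proof.
move=> hg.
have hg2 : g = (2 * g./2)%N by rewrite mul2n -{1}(odd_double_half g) (negbTE hg).
rewrite hg2.
exact: (main (R[i]) g./2 i).
Qed.
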